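(* There exists a constant $\kappa>0$, independent of $r$ and of $s$, such that for every integer $r\ge1$ and every word $s^{(r)}=s_1\dots s_r\in\mathcal A^r$ with $p(s^{(r)})>0$, the generating function $\Phi(s^{(r)},t)=\mathbb E[t^{Y}]$ of the waiting time $Y=\min\{n\ge r: (U_n,U_{n-1},\dots,U_{n-r+1})=(s_1,\dots,s_r)\}$ has radius of convergence at least $1+\kappa\,p(s^{(r)})$.
   Context: Alphabet $\mathcal A=\{A,C,G,T\}$. $U=(U_n)_{n\ge1}$ is a stationary Markov chain of order 1 on $\mathcal A$ with transition matrix $Q$ (irreducible and aperiodic) started from its invariant measure $p$ (so $p(u)>0$ for all $u$). $p(s^{(r)}):=\mathbb P(U_1=s_r,U_2=s_{r-1},\dots,U_r=s_1)$. *)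

(* Defs.v *)
From Stdlib Require Import Reals Lra List Arith.
From Coquelicot Require Import Coquelicot.
Open Scope R_scope.

Inductive letter : Set := LA | LC | LG | LT.

Definition letter_eqb (a b : letter) : bool :=
  match a, b with
  | LA, LA | LC, LC | LG, LG | LT, LT => true
  | _, _ => false
  end.

Fixpoint word_eqb (u v : list letter) : bool :=
  match u, v with
  | nil, nil => true
  | a :: u', b :: v' => letter_eqb a b && word_eqb u' v'
  | _, _ => false
  end.

Definition letters : list letter := LA :: LC :: LG :: LT :: nil.

Definition sumlist {X : Type} (l : list X) (f : X -> R) : R :=
  fold_right Rplus 0 (map f l).

Definition sumA (f : letter -> R) : R := sumlist letters f.

Fixpoint words (n : nat) : list (list letter) :=
  match n with
  | O => nil :: nil
  | S n' => flat_map (fun a => map (cons a) (words n')) letters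
  end.

Fixpoint Qpow (Q : letter -> letter -> R) (n : nat) (x y : letter) : R :=
  match n with
  | O => if letter_eqb x y then 1 else 0
  | S n' => sumA (fun z => Qpow Q n' x z * Q z y)
  end.

Definition stochastic (Q : letter -> letter -> R) : Prop :=
  (forall x y, 0 <= Q x y) /\ (forall x, sumA (fun y => Q x y) = 1).

Definition irreducible (Q : letter -> letter -> R) : Prop :=
  forall x y, exists n, (1 <= n)%nat /\ 0 < Qpow Q n x y.

Definition aperiodic (Q : letter -> letter -> R) : Prop :=
  forall x d, (forall n, (1 <= n)%nat -> 0 < Qpow Q n x x -> Nat.divide d n) -> d = 1%nat.

Definition invariant_measure (Q : letter -> letter -> R) (p : letter -> R) : Prop :=
  (forall x, 0 <= p x) /\ sumA p = 1 /\
  (forall y, sumA (fun x => p x * Q x y) = p y).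

Fixpoint trans_prob (Q : letter -> letter -> R) (u : letter) (w : list letter) : R :=
  match w with
  | nil => 1
  | v :: w' => Q u v * trans_prob Q v w'
  end.

(* P(U_1 = u_1, ..., U_n = u_n) for the stationary chain, w = [u_1; ...; u_n] *)
Definition path_prob (p : letter -> R) (Q : letter -> letter -> R) (w : list letter) : R :=
  match w with
  | nil => 1
  | u :: w' => p u * trans_prob Q u w'
  end.

(* p(s^(r)) = P(U_1 = s_r, ..., U_r = s_1), with s = [s_1; ...; s_r] *)
Definition pword (p : letter -> R) (Q : letter -> letter -> R) (s : list letter) : R :=
  path_prob p Q (rev s).

(* For w = [U_1; ...; U_N] and m <= N: the event
   (U_m, U_{m-1}, ..., U_{m-r+1}) = (s_1, ..., s_r), with r = length s. *)
Definition occurs_at (s w : list letter) (m : nat) : bool :=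
  Nat.leb (length s) m &&
  word_eqb (rev (skipn (m - length s) (firstn m w))) s.

(* Y = length w, i.e. first m >= r with an occurrence is m = length w *)
Definition first_hit (s w : list letter) : bool :=
  Nat.leb (length s) (length w) && occurs_at s w (length w) &&
  forallb (fun m => negb (occurs_at s w m)) (seq (length s) (length w - length s)).

Definition hit_prob (p : letter -> R) (Q : letter -> letter -> R) (s : list letter) (n : nat) : R :=
  sumlist (words n) (fun w => if first_hit s w then path_prob p Q w else 0).

(* Phi(s^(r), t) = E[t^Y] = sum_n P(Y = n) t^n, as a power series in t *)

(* Main.v *)
Require Import Defs.
From Stdlib Require Import Reals Lra Lia List Arith Classical.
From Coquelicot Require Import Coquelicot.
Open Scope R_scope.

Lemma sumlist_nil {X} (f : X -> R) : sumlist nil f = 0.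
Proof. reflexivity. Qed.
Lemma sumlist_cons {X} (a : X) l f : sumlist (a :: l) f = f a + sumlist l f.
Proof. reflexivity. Qed.
Lemma sumlist_app {X} (l1 l2 : list X) f : sumlist (l1 ++ l2) f = sumlist l1 f + sumlist l2 f.
Proof. induction l1; simpl; rewrite ?sumlist_nil, ?sumlist_cons; [ring|]. rewrite IHl1; ring. Qed.
Lemma sumlist_ext_in {X} (l : list X) f g : (forall x, In x l -> f x = g x) -> sumlist l f = sumlist l g.
Proof. induction l; intros H; [reflexivity|]. rewrite !sumlist_cons. rewrite H by (simpl; auto).
 rewrite IHl; [reflexivity|]. intros; apply H; simpl; auto. Qed.
Lemma sumlist_ext {X} (l : list X) f g : (forall x, f x = g x) -> sumlist l f = sumlist l g.
Proof. intros; apply sumlist_ext_in; auto. Qed.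
Lemma sumlist_le_in {X} (l : list X) f g : (forall x, In x l -> f x <= g x) -> sumlist l f <= sumlist l g.
Proof. induction l; intros H; [rewrite !sumlist_nil; lra|]. rewrite !sumlist_cons.
 apply Rplus_le_compat; [apply H; simpl; auto| apply IHl; intros; apply H; simpl; auto]. Qed.
Lemma sumlist_le {X} (l : list X) f g : (forall x, f x <= g x) -> sumlist l f <= sumlist l g.
Proof. intros; apply sumlist_le_in; auto. Qed.
Lemma sumlist_plus {X} (l : list X) f g : sumlist l (fun x => f x + g x) = sumlist l f + sumlist l g.
Proof. induction l; [rewrite !sumlist_nil; ring|rewrite !sumlist_cons, IHl; ring]. Qed.
Lemma sumlist_scal_l {X} (l : list X) c f : sumlist l (fun x => c * f x) = c * sumlist l f.
Proof. induction l; [rewrite !sumlist_nil; ring|rewrite !sumlist_cons, IHl; ring]. Qed.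
Lemma sumlist_scal_r {X} (l : list X) c f : sumlist l (fun x => f x * c) = sumlist l f * c.
Proof. induction l; [rewrite !sumlist_nil; ring|rewrite !sumlist_cons, IHl; ring]. Qed.
Lemma sumlist_zero {X} (l : list X) : sumlist l (fun _ => 0) = 0.
Proof. induction l; [reflexivity|rewrite sumlist_cons, IHl; ring]. Qed.
Lemma sumlist_nonneg {X} (l : list X) f : (forall x, In x l -> 0 <= f x) -> 0 <= sumlist l f.
Proof. intros H. rewrite <- (sumlist_zero l). apply sumlist_le_in; auto. Qed.
Lemma sumlist_swap {X Y} (l1 : list X) (l2 : list Y) f :
  sumlist l1 (fun i => sumlist l2 (fun j => f i j)) = sumlist l2 (fun j => sumlist l1 (fun i => f i j)).
Proof. induction l1; simpl.
 - rewrite sumlist_nil. symmetry. apply sumlist_zero.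
 - rewrite sumlist_cons, IHl1. rewrite <- sumlist_plus. apply sumlist_ext. intros; rewrite sumlist_cons; ring. Qed.
Lemma sumlist_map {X Y} (h : X -> Y) l f : sumlist (map h l) f = sumlist l (fun x => f (h x)).
Proof. induction l; [reflexivity|]. simpl. rewrite !sumlist_cons, IHl; reflexivity. Qed.
Lemma sumlist_flat_map {X Y} (g : X -> list Y) l f : sumlist (flat_map g l) f = sumlist l (fun a => sumlist (g a) f).
Proof. induction l; [reflexivity|]. simpl. rewrite sumlist_app, sumlist_cons, IHl; reflexivity. Qed.
Lemma sumlist_const_le {X} (l : list X) f c : (forall x, In x l -> f x <= c) -> sumlist l f <= INR (length l) * c.
Proof. induction l; intros H; cbn [length]. rewrite sumlist_nil; simpl; lra.
 rewrite sumlist_cons. rewrite S_INR. assert (f a <= c) by (apply H; simpl; auto).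
 assert (sumlist l f <= INR (length l) * c) by (apply IHl; intros; apply H; simpl; auto). lra. Qed.

Lemma sumA_eq f : sumA f = f LA + (f LC + (f LG + (f LT + 0))).
Proof. reflexivity. Qed.

Lemma words_S n f : sumlist (words (S n)) f = sumA (fun a => sumlist (words n) (fun w => f (a :: w))).
Proof. change (words (S n)) with (flat_map (fun a => map (cons a) (words n)) letters). rewrite sumlist_flat_map. unfold sumA. apply sumlist_ext. intros. apply sumlist_map. Qed.
Lemma words_0 f : sumlist (words 0) f = f nil.
Proof. simpl. rewrite sumlist_cons, sumlist_nil; ring. Qed.
Lemma words_length n w : In w (words n) -> length w = n.
Proof. revert w; induction n; intros w H.
 - destruct H as [<-|[]]; reflexivity.
 - change (words (S n)) with (flat_map (fun a => map (cons a) (words n)) letters) in H. apply in_flat_map in H. destruct H as [a [_ H]]. apply in_map_iff in H. destruct H as [w' [<- H]].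
   simpl; rewrite IHn; auto. Qed.
Lemma words_split n k f : sumlist (words (n + k)) f =
  sumlist (words n) (fun w => sumlist (words k) (fun v => f (w ++ v))).
Proof. revert f; induction n; intros f.
 - simpl plus. rewrite words_0. reflexivity.
 - simpl plus. rewrite (words_S (n + k)), (words_S n). unfold sumA; apply sumlist_ext; intro a. rewrite IHn. reflexivity. Qed.

Lemma letter_eqb_spec a b : letter_eqb a b = true <-> a = b.
Proof. destruct a, b; simpl; split; intro; try discriminate; auto. Qed.
Lemma word_eqb_spec u v : word_eqb u v = true <-> u = v.
Proof. revert v; induction u as [|a u IH]; destruct v as [|b v]; simpl; split; intro H; try discriminate; auto.
 - apply andb_prop in H. destruct H as [H1 H2]. apply letter_eqb_spec in H1. apply IH in H2. subst; auto.
 - injection H; intros; subst. apply andb_true_intro; split; [apply letter_eqb_spec|apply IH]; auto. Qed.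
Lemma word_eqb_refl u : word_eqb u u = true.
Proof. apply word_eqb_spec; auto. Qed.

Lemma sumA_zero : sumA (fun _ => 0) = 0.
Proof. rewrite sumA_eq; ring. Qed.

Lemma words_indicator n u g : length u = n ->
  sumlist (words n) (fun c => if word_eqb c u then g c else 0) = g u.
Proof. revert u g; induction n; intros u g Hu.
 - destruct u; [|discriminate]. rewrite words_0. reflexivity.
 - destruct u as [|a u]; [discriminate|]. simpl in Hu. injection Hu; intro Hu'.
   rewrite words_S.
   transitivity (sumA (fun b => if letter_eqb b a then sumlist (words n) (fun w => if word_eqb w u then g (a :: w) else 0) else 0)).
   + unfold sumA; apply sumlist_ext; intro b. simpl.
     destruct (letter_eqb b a) eqn:E.
     * apply letter_eqb_spec in E; subst. apply sumlist_ext; intro w. reflexivity.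
     * apply sumlist_zero.
   + rewrite (IHn u (fun w => g (a :: w))) by auto. destruct a; rewrite sumA_eq; simpl; ring. Qed.

Lemma last_indep {X} (b : X) w d d' : last (b :: w) d = last (b :: w) d'.
Proof. revert b; induction w; intros b; [reflexivity|]. change (last (a :: w) d = last (a :: w) d'). apply IHw. Qed.
Lemma last_cons {X} (a : X) w x : last (a :: w) x = last w a.
Proof. destruct w; [reflexivity|]. change (last (x0 :: w) x = last (x0 :: w) a). apply last_indep. Qed.
Lemma last_app {X} (w v : list X) x : last (w ++ v) x = last v (last w x).
Proof. revert x; induction w; intros x; [reflexivity|]. simpl app. rewrite !last_cons. apply IHw. Qed.

Lemma tp_app Q x w v : trans_prob Q x (w ++ v) = trans_prob Q x w * trans_prob Q (last w x) v.
Proof. revert x; induction w; intros x; simpl app.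
 - simpl. ring.
 - change (Q x a * trans_prob Q a (w ++ v) = Q x a * trans_prob Q a w * trans_prob Q (last (a :: w) x) v).
   rewrite last_cons, IHw. ring. Qed.

Lemma tp_bounds Q : stochastic Q -> forall x w, 0 <= trans_prob Q x w <= 1.
Proof. intros [H0 H1] x w. revert x; induction w; intros x; simpl. lra.
 specialize (IHw a). assert (Q x a <= 1).
 { specialize (H1 x). rewrite sumA_eq in H1. pose proof (H0 x LA); pose proof (H0 x LC);
   pose proof (H0 x LG); pose proof (H0 x LT). destruct a; lra. }
 specialize (H0 x a). split; nra. Qed.

Lemma tp_sum1 Q : stochastic Q -> forall k x, sumlist (words k) (trans_prob Q x) = 1.
Proof. intros HQ k; induction k; intros x.
 - rewrite words_0. reflexivity.
 - rewrite words_S. simpl. destruct HQ as [_ H1]. rewrite <- (H1 x). unfold sumA; apply sumlist_ext; intro a.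
   rewrite sumlist_scal_l, IHk. ring. Qed.

Lemma Qpow_CK Q m n x y : Qpow Q (m + n) x y = sumA (fun z => Qpow Q m x z * Qpow Q n z y).
Proof. revert y; induction n; intros y.
 - rewrite Nat.add_0_r. destruct y; rewrite sumA_eq; simpl; ring.
 - rewrite Nat.add_succ_r. simpl. rewrite !sumA_eq. rewrite !IHn. rewrite !sumA_eq. ring. Qed.

Lemma Qpow_1 Q x y : Qpow Q 1 x y = Q x y.
Proof. destruct x; simpl; rewrite sumA_eq; simpl; ring. Qed.

Lemma Qpow_nonneg Q : stochastic Q -> forall n x y, 0 <= Qpow Q n x y.
Proof. intros [H0 _] n; induction n; intros x y; simpl.
 - destruct (letter_eqb x y); lra.
 - rewrite sumA_eq. pose proof (IHn x LA); pose proof (IHn x LC); pose proof (IHn x LG); pose proof (IHn x LT).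
   pose proof (H0 LA y); pose proof (H0 LC y); pose proof (H0 LG y); pose proof (H0 LT y). nra. Qed.

Lemma Qpow_sum1 Q : stochastic Q -> forall n x, sumA (Qpow Q n x) = 1.
Proof. intros HQ n; induction n; intros x.
 - destruct x; rewrite sumA_eq; simpl; ring.
 - destruct HQ as [_ H1]. rewrite <- (IHn x). simpl. rewrite !sumA_eq.
   pose proof (H1 LA); pose proof (H1 LC); pose proof (H1 LG); pose proof (H1 LT). rewrite !sumA_eq in *.
   nra. Qed.

Lemma tp_last_sum Q n x f : sumlist (words n) (fun w => trans_prob Q x w * f (last w x)) =
  sumA (fun z => Qpow Q n x z * f z).
Proof. revert x f; induction n; intros x f.
 - rewrite words_0. simpl. destruct x; rewrite sumA_eq; simpl; ring.
 - rewrite words_S. transitivity (sumA (fun a => Q x a * sumA (fun z => Qpow Q n a z * f z))).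
   + unfold sumA at 1 2; apply sumlist_ext; intro a. rewrite <- IHn, <- sumlist_scal_l. apply sumlist_ext; intro w.
     rewrite last_cons. simpl. ring.
   + change (S n) with (1 + n)%nat. transitivity (sumA (fun z => sumA (fun a => Q x a * Qpow Q n a z) * f z)).
     * rewrite !sumA_eq. ring.
     * unfold sumA at 1 3. apply sumlist_ext; intro z. rewrite Qpow_CK. f_equal.
       unfold sumA; apply sumlist_ext; intro a; rewrite Qpow_1; reflexivity. Qed.

Definition ind (b : bool) : R := if b then 1 else 0.

Lemma occ_prefix s w v m : (m <= length w)%nat -> occurs_at s (w ++ v) m = occurs_at s w m.
Proof. intros H. unfold occurs_at. rewrite firstn_app. replace (m - length w)%nat with 0%nat by lia.
 simpl. rewrite app_nil_r. reflexivity. Qed.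

Lemma occ_shift s w v j : (length s <= j)%nat -> occurs_at s (w ++ v) (length w + j) = occurs_at s v j.
Proof. intros H. unfold occurs_at.
 replace (Nat.leb (length s) (length w + j)) with true by (symmetry; apply Nat.leb_le; lia).
 replace (Nat.leb (length s) j) with true by (symmetry; apply Nat.leb_le; lia).
 rewrite firstn_app. rewrite firstn_all2 by lia. replace (length w + j - length w)%nat with j by lia.
 rewrite skipn_app. rewrite skipn_all2 by lia. simpl. f_equal. f_equal. f_equal. lia. Qed.

Lemma word_eqb_rev c s : word_eqb (rev c) s = word_eqb c (rev s).
Proof. destruct (word_eqb (rev c) s) eqn:E1; destruct (word_eqb c (rev s)) eqn:E2; auto.
 - apply word_eqb_spec in E1. subst. rewrite rev_involutive, word_eqb_refl in E2. discriminate.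
 - apply word_eqb_spec in E2. subst. rewrite rev_involutive, word_eqb_refl in E1. discriminate. Qed.

Lemma occ_exact s a c b : length c = length s ->
  occurs_at s (a ++ c ++ b) (length a + length s) = word_eqb c (rev s).
Proof. intros H. rewrite occ_shift by lia. unfold occurs_at.
 rewrite Nat.leb_refl. simpl. rewrite firstn_app, <- H, firstn_all, Nat.sub_diag. simpl. rewrite app_nil_r.
 simpl. apply word_eqb_rev. Qed.

Lemma occ_prob Q (HQ : stochastic Q) s x K j : (length s <= j <= K)%nat ->
  sumlist (words K) (fun v => trans_prob Q x v * ind (occurs_at s v j)) =
  sumA (fun z => Qpow Q (j - length s) x z * trans_prob Q z (rev s)).
Proof. intros Hj. set (r := length s).
 replace K with ((j - r) + (r + (K - j)))%nat by lia.
 rewrite words_split. rewrite <- tp_last_sum. apply sumlist_ext_in. intros a Ha. apply words_length in Ha.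
 rewrite words_split.
 transitivity (sumlist (words r) (fun c => if word_eqb c (rev s) then trans_prob Q x a * trans_prob Q (last a x) c else 0)).
 - apply sumlist_ext_in. intros c Hc. apply words_length in Hc.
   transitivity (sumlist (words (K - j)) (fun b => ind (word_eqb c (rev s)) * (trans_prob Q x a * trans_prob Q (last a x) c) * trans_prob Q (last c (last a x)) b)).
   + apply sumlist_ext_in. intros b _. replace j with (length a + length s)%nat by lia.
     rewrite occ_exact by (unfold r in Hc; lia). rewrite !tp_app. ring.
   + rewrite sumlist_scal_l, tp_sum1 by auto. destruct (word_eqb c (rev s)); simpl; ring.
 - rewrite words_indicator. reflexivity. unfold r. rewrite length_rev. reflexivity. Qed.

Lemma ind_bounds b : 0 <= ind b <= 1.
Proof. destruct b; simpl; lra. Qed.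

Lemma occ_pair_pointwise s v1 v2 j :
  (length v1 < j)%nat -> (length s <= j)%nat ->
  occurs_at s (v1 ++ v2) j = true ->
  word_eqb (skipn (j - length v1 - Nat.min (j - length v1) (length s)) (firstn (j - length v1) v2))
           (skipn (length s - Nat.min (j - length v1) (length s)) (rev s)) = true.
Proof. intros H1 H2 H. unfold occurs_at in H. apply andb_prop in H. destruct H as [_ H].
 apply word_eqb_spec in H. apply (f_equal (@rev letter)) in H. rewrite rev_involutive in H.
 rewrite firstn_app, firstn_all2 in H by lia.
 apply word_eqb_spec. rewrite <- H. rewrite skipn_skipn.
 set (i := length v1) in *. set (r := length s) in *. set (k := Nat.min (j - i) r).
 assert (k <= j - i)%nat by (unfold k; lia). assert (k <= r)%nat by (unfold k; lia).
 replace (r - k + (j - r))%nat with (j - k)%nat by lia.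
 rewrite skipn_app. assert (E : skipn (j - k) v1 = nil) by (apply skipn_all2; lia). rewrite E.
 simpl. f_equal. lia. Qed.

Lemma cond_sum Q (HQ : stochastic Q) (G : nat -> R) (HG : forall z c, trans_prob Q z c <= G (length c))
  y n d k c : (k <= d <= n)%nat -> length c = k ->
  sumlist (words n) (fun v2 => trans_prob Q y v2 * ind (word_eqb (skipn (d - k) (firstn d v2)) c)) <= G k.
Proof. intros Hd Hc.
 replace n with ((d - k) + (k + (n - d)))%nat by lia. rewrite words_split.
 assert (Hs : sumlist (words (d - k)) (trans_prob Q y) = 1) by (apply tp_sum1; auto).
 apply Rle_trans with (sumlist (words (d - k)) (fun a => trans_prob Q y a * G k)).
 2:{ rewrite sumlist_scal_r, Hs. lra. }
 apply sumlist_le_in. intros a Ha. apply words_length in Ha.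
 rewrite words_split.
 transitivity (sumlist (words k) (fun b => if word_eqb b c then trans_prob Q y a * trans_prob Q (last a y) b else 0)).
 - right. apply sumlist_ext_in. intros b Hb. apply words_length in Hb.
   transitivity (sumlist (words (n - d)) (fun e => ind (word_eqb b c) * (trans_prob Q y a * trans_prob Q (last a y) b) * trans_prob Q (last b (last a y)) e)).
   + apply sumlist_ext_in. intros e _.
     rewrite app_assoc, firstn_app, firstn_all2 by (rewrite length_app; lia).
     rewrite length_app. replace (d - (length a + length b))%nat with 0%nat by lia. simpl. rewrite app_nil_r.
     rewrite skipn_app, skipn_all2 by lia. replace (d - k - length a)%nat with 0%nat by lia. simpl.
     rewrite <- app_assoc, !tp_app. ring.
   + rewrite sumlist_scal_l, tp_sum1 by auto. destruct (word_eqb b c); simpl; ring.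
 - rewrite words_indicator by auto. pose proof (HG (last a y) c). rewrite Hc in H.
   pose proof (tp_bounds Q HQ y a). nra. Qed.

Lemma occ_pair Q (HQ : stochastic Q) (G : nat -> R) (HG : forall z c, trans_prob Q z c <= G (length c))
  s x K i j : (length s <= i)%nat -> (i < j)%nat -> (j <= K)%nat ->
  sumlist (words K) (fun v => trans_prob Q x v * ind (occurs_at s v i) * ind (occurs_at s v j)) <=
  sumlist (words K) (fun v => trans_prob Q x v * ind (occurs_at s v i)) * G (Nat.min (j - i) (length s)).
Proof. intros Hi Hij HjK. replace K with (i + (K - i))%nat by lia. rewrite !words_split.
 rewrite <- sumlist_scal_r. apply sumlist_le_in. intros v1 Hv1. apply words_length in Hv1.
 set (k := Nat.min (j - i) (length s)).
 assert (HC := cond_sum Q HQ G HG (last v1 x) (K - i) (j - i) k (skipn (length s - k) (rev s))).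
 assert (Hlen : length (skipn (length s - k) (rev s)) = k) by (rewrite length_skipn, length_rev; unfold k; lia).
 specialize (HC ltac:(unfold k; lia) Hlen).
 apply Rle_trans with (trans_prob Q x v1 * ind (occurs_at s v1 i) *
   sumlist (words (K - i)) (fun v2 => trans_prob Q (last v1 x) v2 * ind (word_eqb (skipn (j - i - k) (firstn (j - i) v2)) (skipn (length s - k) (rev s))))).
 - rewrite <- sumlist_scal_l. apply sumlist_le_in. intros v2 Hv2.
   rewrite occ_prefix by lia. rewrite tp_app.
   pose proof (tp_bounds Q HQ x v1). pose proof (tp_bounds Q HQ (last v1 x) v2).
   pose proof (ind_bounds (occurs_at s v1 i)).
   assert (ind (occurs_at s (v1 ++ v2) j) <= ind (word_eqb (skipn (j - i - k) (firstn (j - i) v2)) (skipn (length s - k) (rev s)))).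
   { destruct (occurs_at s (v1 ++ v2) j) eqn:E.
     - assert (L1 : (length v1 < j)%nat) by lia. assert (L2 : (length s <= j)%nat) by lia.
       pose proof (occ_pair_pointwise s v1 v2 j L1 L2 E) as P. rewrite Hv1 in P. fold k in P.
       rewrite P. simpl; lra.
     - simpl. apply ind_bounds. }
   set (a1 := trans_prob Q x v1) in *. set (a2 := trans_prob Q (last v1 x) v2) in *.
   set (a3 := ind (occurs_at s v1 i)) in *. set (a4 := ind (occurs_at s (v1 ++ v2) j)) in *.
   set (a5 := ind (word_eqb _ _)) in *.
   replace (a1 * a2 * a3 * a4) with ((a1 * a3 * a2) * a4) by ring.
   replace (a1 * a3 * (a2 * a5)) with ((a1 * a3 * a2) * a5) by ring.
   apply Rmult_le_compat_l; [|assumption]. apply Rmult_le_pos; [apply Rmult_le_pos|]; lra.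
 - transitivity (trans_prob Q x v1 * ind (occurs_at s v1 i) * G k).
   + pose proof (tp_bounds Q HQ x v1). pose proof (ind_bounds (occurs_at s v1 i)).
     apply Rmult_le_compat_l; [nra|]. exact HC.
   + right. f_equal.
     transitivity (sumlist (words (K - i)) (fun v2 => trans_prob Q x v1 * ind (occurs_at s v1 i) * trans_prob Q (last v1 x) v2)).
     * rewrite sumlist_scal_l, tp_sum1 by auto. ring.
     * apply sumlist_ext; intro v2. rewrite occ_prefix by lia. rewrite tp_app. ring.
Qed.

Lemma det_zero Q (HQ : stochastic Q) a b z : Q a b = 1 -> z <> b -> Q a z = 0.
Proof. intros H Hz. destruct HQ as [H0 H1]. specialize (H1 a). rewrite sumA_eq in H1.
 pose proof (H0 a LA); pose proof (H0 a LC); pose proof (H0 a LG); pose proof (H0 a LT).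
 destruct b, z; try congruence; lra. Qed.

Lemma det_row Q (HQ : stochastic Q) a b z : Q a b = 1 -> Q a z = if letter_eqb z b then 1 else 0.
Proof. intros H. destruct (letter_eqb z b) eqn:E.
 - apply letter_eqb_spec in E; subst; auto.
 - apply (det_zero Q HQ a b); auto. intro; subst. destruct b; discriminate. Qed.

Lemma det_step Q (HQ : stochastic Q) a b n y : Q a b = 1 -> Qpow Q (S n) a y = Qpow Q n b y.
Proof. intros H. change (S n) with (1 + n)%nat. rewrite Qpow_CK. rewrite sumA_eq. rewrite !Qpow_1.
 rewrite !(det_row Q HQ a b _ H). destruct b; simpl; ring. Qed.

Lemma cycle_false Q (HQ : stochastic Q) (Hirr : irreducible Q) (Hap : aperiodic Q) (cyc : list letter) :
  (1 <= length cyc)%nat -> NoDup cyc ->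
  (forall m, (m < length cyc)%nat -> Q (nth m cyc LA) (nth (S m mod length cyc) cyc LA) = 1) -> False.
Proof. intros Hc Hnd Hcy. set (c := length cyc) in *.
 set (f := fun k => nth (k mod c) cyc LA).
 assert (Df : forall k, Q (f k) (f (S k)) = 1).
 { intros k. unfold f. specialize (Hcy (k mod c) ltac:(apply Nat.mod_upper_bound; lia)).
   replace (S (k mod c)) with (k mod c + 1)%nat in Hcy by lia. rewrite Nat.Div0.add_mod_idemp_l in Hcy.
   replace (k + 1)%nat with (S k) in Hcy by lia. exact Hcy. }
 assert (Qf : forall n k z, Qpow Q n (f k) z = if letter_eqb (f (k + n)%nat) z then 1 else 0).
 { induction n; intros k z.
   - rewrite Nat.add_0_r. reflexivity.
   - rewrite (det_step Q HQ _ _ n z (Df k)). rewrite IHn. replace (S k + n)%nat with (k + S n)%nat by lia. reflexivity. }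
 assert (Hc1 : c = 1%nat).
 { apply (Hap (f 0%nat)). intros n Hn Hpos. rewrite Qf in Hpos. simpl in Hpos.
   destruct (letter_eqb (f n) (f 0%nat)) eqn:E; [|lra].
   apply letter_eqb_spec in E. unfold f in E. rewrite Nat.Div0.mod_0_l in E.
   assert (M : (n mod c = 0)%nat).
   { apply (proj1 (NoDup_nth cyc LA) Hnd); [apply Nat.mod_upper_bound; lia | unfold c; lia | exact E]. }
   apply Nat.Lcm0.mod_divide. exact M. }
 assert (Hf : forall n, f n = f 0%nat).
 { intros n. unfold f. rewrite Hc1. rewrite !Nat.mod_1_r. reflexivity. }
 set (y := f 0%nat) in *.
 assert (Hz : exists z, z <> y) by (destruct y; [exists LC|exists LA|exists LA|exists LA]; discriminate).
 destruct Hz as [z Hz]. destruct (Hirr y z) as [n [_ Hn]].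
 unfold y in Hn. rewrite Qf, Hf in Hn. fold y in Hn.
 destruct (letter_eqb y z) eqn:E. apply letter_eqb_spec in E. congruence. lra. Qed.

Ltac nodup_tac := repeat constructor; simpl; intuition discriminate.
Ltac cyc_tail := intros m Hm; destruct m as [|[|[|[|]]]]; simpl in *; try lia; assumption.

Lemma cyc1 Q (HQ : stochastic Q) (Hirr : irreducible Q) (Hap : aperiodic Q) a : Q a a = 1 -> False.
Proof. intros H. apply (cycle_false Q HQ Hirr Hap (a :: nil)); [simpl; lia| nodup_tac | cyc_tail]. Qed.
Lemma cyc2 Q (HQ : stochastic Q) (Hirr : irreducible Q) (Hap : aperiodic Q) a b : NoDup (a :: b :: nil) -> Q a b = 1 -> Q b a = 1 -> False.
Proof. intros Hn H1 H2. apply (cycle_false Q HQ Hirr Hap (a :: b :: nil)); [simpl; lia| auto | cyc_tail]. Qed.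
Lemma cyc3 Q (HQ : stochastic Q) (Hirr : irreducible Q) (Hap : aperiodic Q) a b c : NoDup (a :: b :: c :: nil) -> Q a b = 1 -> Q b c = 1 -> Q c a = 1 -> False.
Proof. intros Hn H1 H2 H3. apply (cycle_false Q HQ Hirr Hap (a :: b :: c :: nil)); [simpl; lia| auto | cyc_tail]. Qed.
Lemma cyc4 Q (HQ : stochastic Q) (Hirr : irreducible Q) (Hap : aperiodic Q) a b c d : NoDup (a :: b :: c :: d :: nil) -> Q a b = 1 -> Q b c = 1 -> Q c d = 1 -> Q d a = 1 -> False.
Proof. intros Hn H1 H2 H3 H4. apply (cycle_false Q HQ Hirr Hap (a :: b :: c :: d :: nil)); [simpl; lia| auto | cyc_tail]. Qed.

Lemma prod1 a b : 0 <= a <= 1 -> 0 <= b <= 1 -> 1 <= a * b -> a = 1 /\ b = 1.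
Proof. intros. split; nra. Qed.

Lemma tp4_lt1 Q (HQ : stochastic Q) (Hirr : irreducible Q) (Hap : aperiodic Q) x v :
  length v = 4%nat -> trans_prob Q x v < 1.
Proof. intros Hv. destruct v as [|x1 [|x2 [|x3 [|x4 [|]]]]]; try discriminate. simpl.
 apply Rnot_le_lt. intros Hge.
 assert (B : forall a b, 0 <= Q a b <= 1).
 { intros a b. pose proof (tp_bounds Q HQ a (b :: nil)). simpl in H. lra. }
 rewrite Rmult_1_r in Hge.
 assert (U : forall a b, 0 <= a <= 1 -> 0 <= b <= 1 -> 0 <= a * b <= 1) by (intros; split; nra).
 destruct (prod1 _ _ (B x x1) (U _ _ (B x1 x2) (U _ _ (B x2 x3) (B x3 x4))) Hge) as [E1 R1].
 destruct (prod1 _ _ (B x1 x2) (U _ _ (B x2 x3) (B x3 x4)) ltac:(lra)) as [E2 R2].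
 destruct (prod1 _ _ (B x2 x3) (B x3 x4) ltac:(lra)) as [E3 R3].
 assert (E4 : Q x3 x4 = 1) by lra.
 clear Hge R1 R2 R3 Hv U B.
 destruct x, x1, x2, x3, x4;
 first
 [ match goal with H : Q ?a ?a = 1 |- _ => exact (cyc1 Q HQ Hirr Hap a H) end
 | match goal with H1 : Q ?a ?b = 1, H2 : Q ?b ?a = 1 |- _ =>
     exact (cyc2 Q HQ Hirr Hap a b ltac:(nodup_tac) H1 H2) end
 | match goal with H1 : Q ?a ?b = 1, H2 : Q ?b ?c = 1, H3 : Q ?c ?a = 1 |- _ =>
     exact (cyc3 Q HQ Hirr Hap a b c ltac:(nodup_tac) H1 H2 H3) end
 | match goal with H1 : Q ?a ?b = 1, H2 : Q ?b ?c = 1, H3 : Q ?c ?d = 1, H4 : Q ?d ?a = 1 |- _ =>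
     exact (cyc4 Q HQ Hirr Hap a b c d ltac:(nodup_tac) H1 H2 H3 H4) end ].
Qed.

Lemma words_complete n v : length v = n -> In v (words n).
Proof. revert v; induction n; intros v Hv.
 - destruct v; [left; reflexivity|discriminate].
 - destruct v as [|a v]; [discriminate|]. simpl in Hv.
   change (words (S n)) with (flat_map (fun a => map (cons a) (words n)) letters).
   apply in_flat_map. exists a. split; [destruct a; simpl; tauto|]. apply in_map. apply IHn; lia. Qed.

Definition maxl (l : list R) : R := fold_right Rmax 0 l.
Lemma maxl_ge l x : In x l -> x <= maxl l.
Proof. induction l; simpl; [tauto|]. intros [<-|H]; [apply Rmax_l|]. eapply Rle_trans; [apply IHl; auto|apply Rmax_r]. Qed.
Lemma maxl_lt l c : 0 < c -> (forall x, In x l -> x < c) -> maxl l < c.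
Proof. induction l; simpl; intros Hc H; auto. apply Rmax_lub_lt; auto. Qed.

Lemma pow_decr x m n : 0 <= x <= 1 -> (m <= n)%nat -> x ^ n <= x ^ m.
Proof. intros Hx Hmn. replace n with (m + (n - m))%nat by lia. rewrite pow_add.
 assert (0 <= x ^ (n - m) <= 1). { induction (n - m)%nat; simpl; [lra|]. split; nra. }
 assert (0 <= x ^ m) by (apply pow_le; lra). nra. Qed.

Lemma geom_bound Q (HQ : stochastic Q) (Hirr : irreducible Q) (Hap : aperiodic Q) :
  exists beta C0, 0 < beta < 1 /\ 1 <= C0 /\ forall z c, trans_prob Q z c <= C0 * beta ^ length c.
Proof.
 set (L := flat_map (fun x => map (trans_prob Q x) (words 4)) letters).
 set (g := Rmax (1/2) (maxl L)).
 assert (Hg1 : g < 1).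
 { unfold g. apply Rmax_lub_lt; [lra|]. apply maxl_lt; [lra|]. intros y Hy. unfold L in Hy.
   apply in_flat_map in Hy. destruct Hy as [x [_ Hy]]. apply in_map_iff in Hy. destruct Hy as [v [<- Hv]].
   apply words_length in Hv. apply tp4_lt1; auto. }
 assert (Hg0 : 1/2 <= g) by apply Rmax_l.
 assert (Hg4 : forall z c, length c = 4%nat -> trans_prob Q z c <= g).
 { intros z c Hc. eapply Rle_trans; [|apply Rmax_r]. apply maxl_ge. unfold L. apply in_flat_map.
   exists z. split; [destruct z; simpl; tauto|]. apply in_map. apply words_complete; auto. }
 set (beta := sqrt (sqrt g)).
 assert (Hsg : 0 < sqrt g < 1). { split. apply sqrt_lt_R0; lra. rewrite <- sqrt_1. apply sqrt_lt_1; lra. }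
 assert (Hb : 0 < beta < 1). { unfold beta. split. apply sqrt_lt_R0; lra. rewrite <- sqrt_1. apply sqrt_lt_1; lra. }
 assert (Hb4 : beta ^ 4 = g).
 { unfold beta. replace 4%nat with (2 * 2)%nat by reflexivity. rewrite pow_mult.
   rewrite pow2_sqrt by (left; apply Hsg). rewrite pow2_sqrt; lra. }
 exists beta, (1 / g). split; [auto|]. split. { apply Rmult_le_reg_r with g; [lra|]. field_simplify; lra. }
 intros z c. remember (length c) as n eqn:Hn. revert z c Hn. induction n as [n IH] using lt_wf_ind. intros z c Hn.
 destruct (Nat.lt_ge_cases n 4) as [Hlt|Hge].
 - pose proof (tp_bounds Q HQ z c). assert (beta ^ 4 <= beta ^ n) by (apply pow_decr; lra||lia).
   apply Rle_trans with 1; [lra|]. rewrite Hb4 in H0. apply Rmult_le_reg_r with g; [lra|].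
   replace (1 / g * beta ^ n * g) with (beta ^ n) by (field; lra). lra.
 - rewrite <- (firstn_skipn 4 c). rewrite tp_app.
   assert (L4 : length (firstn 4 c) = 4%nat) by (rewrite length_firstn; lia).
   assert (L5 : length (skipn 4 c) = (n - 4)%nat) by (rewrite length_skipn; lia).
   pose proof (Hg4 z _ L4). pose proof (IH (n - 4)%nat ltac:(lia) (last (firstn 4 c) z) (skipn 4 c) (eq_sym L5)).
   pose proof (tp_bounds Q HQ z (firstn 4 c)). pose proof (tp_bounds Q HQ (last (firstn 4 c) z) (skipn 4 c)).
   replace (beta ^ n) with (beta ^ 4 * beta ^ (n - 4)) by (rewrite <- pow_add; f_equal; lia).
   rewrite Hb4.
   apply Rle_trans with (g * (1 / g * beta ^ (n - 4))).
   + apply Rmult_le_compat; lra.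
   + right. field. lra. Qed.

Lemma fin4 (Phi : letter -> nat -> Prop) :
  (forall y M M', Phi y M -> (M <= M')%nat -> Phi y M') ->
  (forall y, exists M, Phi y M) -> exists M, forall y, Phi y M.
Proof. intros Hm H. destruct (H LA) as [a Ha], (H LC) as [b Hb], (H LG) as [c Hc], (H LT) as [d Hd].
 exists (a + b + c + d)%nat. intros y; destruct y; eapply Hm; eauto; lia. Qed.

Lemma sumlist_seq_shift a b n f : sumlist (seq (a + b) n) f = sumlist (seq b n) (fun i => f (a + i)%nat).
Proof. revert b; induction n; intros b; [reflexivity|]. simpl seq. rewrite !sumlist_cons.
 replace (S (a + b)) with (a + S b)%nat by lia. rewrite IHn. reflexivity. Qed.

Lemma sumlist_ge_elem {X} (l : list X) f a : In a l -> (forall x, In x l -> 0 <= f x) -> f a <= sumlist l f.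
Proof. induction l; simpl; [tauto|]. intros Ha H. rewrite sumlist_cons. destruct Ha as [<-|Ha].
 - assert (0 <= sumlist l f) by (apply sumlist_nonneg; intros; apply H; auto). lra.
 - assert (0 <= f a0) by (apply H; auto). assert (f a <= sumlist l f) by (apply IHl; auto). lra. Qed.

Definition minA (f : letter -> R) := Rmin (f LA) (Rmin (f LC) (Rmin (f LG) (f LT))).
Lemma minA_le f z : minA f <= f z.
Proof. unfold minA. destruct z.
 - apply Rmin_l.
 - eapply Rle_trans; [apply Rmin_r|apply Rmin_l].
 - eapply Rle_trans; [apply Rmin_r|]. eapply Rle_trans; [apply Rmin_r|apply Rmin_l].
 - eapply Rle_trans; [apply Rmin_r|]. eapply Rle_trans; [apply Rmin_r|apply Rmin_r]. Qed.
Lemma minA_pos f : (forall z, 0 < f z) -> 0 < minA f.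
Proof. intros H. unfold minA. repeat apply Rmin_pos; auto. Qed.

Lemma cesaro Q (HQ : stochastic Q) (Hirr : irreducible Q) :
  exists M eta, (1 <= M)%nat /\ 0 < eta /\
    forall r x y, INR r * eta <= sumlist (seq 0 (M * r)) (fun k => Qpow Q k x y).
Proof.
 assert (HM : exists M, forall x y, exists n, (n < M)%nat /\ 0 < Qpow Q n x y).
 { apply fin4 with (Phi := fun x M => forall y, exists n, (n < M)%nat /\ 0 < Qpow Q n x y).
   - intros x M M' H HM y. destruct (H y) as [n [Hn Hp]]. exists n; split; [lia|auto].
   - intros x. apply fin4 with (Phi := fun y M => exists n, (n < M)%nat /\ 0 < Qpow Q n x y).
     + intros y M M' [n [Hn Hp]] HM. exists n; split; [lia|auto].
     + intros y. destruct (Hirr x y) as [n [_ Hn]]. exists (S n), n. split; [lia|auto]. }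
 destruct HM as [M HM].
 set (Sxy := fun x y => sumlist (seq 0 M) (fun i => Qpow Q i x y)).
 assert (HS : forall x y, 0 < Sxy x y).
 { intros x y. destruct (HM x y) as [n [Hn Hp]]. eapply Rlt_le_trans; [exact Hp|].
   apply (sumlist_ge_elem (seq 0 M) (fun i => Qpow Q i x y) n).
   - apply in_seq; lia.
   - intros; apply Qpow_nonneg; auto. }
 set (eta := minA (fun x => minA (fun y => Sxy x y))).
 assert (He : forall x y, eta <= Sxy x y).
 { intros x y. unfold eta. eapply Rle_trans; [apply (minA_le _ x)|]. apply minA_le. }
 assert (Hep : 0 < eta) by (apply minA_pos; intros; apply minA_pos; auto).
 assert (M1 : (1 <= M)%nat).
 { destruct (HM LA LA) as [n [Hn _]]. lia. }
 exists M, eta. split; [auto|]. split; [auto|].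
 intros r x y. induction r.
 - simpl. rewrite Nat.mul_0_r. simpl. rewrite sumlist_nil. lra.
 - rewrite S_INR. replace (M * S r)%nat with (M * r + M)%nat by lia. rewrite seq_app, sumlist_app.
   replace (0 + M * r)%nat with (M * r + 0)%nat by lia. rewrite sumlist_seq_shift.
   assert (eta <= sumlist (seq 0 M) (fun i => Qpow Q (M * r + i) x y)).
   { transitivity (sumA (fun z => Qpow Q (M * r) x z * Sxy z y)).
     - apply Rle_trans with (sumA (fun z => Qpow Q (M * r) x z * eta)).
       + unfold sumA. rewrite sumlist_scal_r. fold (sumA (Qpow Q (M * r) x)). rewrite Qpow_sum1 by auto. lra.
       + unfold sumA. apply sumlist_le. intros z. apply Rmult_le_compat_l; [apply Qpow_nonneg; auto|apply He].
     - right. unfold Sxy. transitivity (sumlist (seq 0 M) (fun i => sumA (fun z => Qpow Q (M * r) x z * Qpow Q i z y))).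
       + unfold sumA. rewrite sumlist_swap. apply sumlist_ext. intros z. rewrite sumlist_scal_l. reflexivity.
       + apply sumlist_ext. intros i. rewrite Qpow_CK. reflexivity. }
   lra. Qed.

Lemma geo_tail b i n a : 0 < b < 1 ->
  sumlist (seq a n) (fun j => if Nat.ltb i j then b ^ (j - i) else 0) <= b ^ (Nat.max a (S i) - i) / (1 - b).
Proof. intros Hb. revert a; induction n; intros a.
 - simpl. rewrite sumlist_nil. apply Rdiv_le_0_compat; [apply pow_le; lra|lra].
 - simpl seq. rewrite sumlist_cons. specialize (IHn (S a)). destruct (Nat.ltb i a) eqn:E.
   + apply Nat.ltb_lt in E. replace (Nat.max (S a) (S i) - i)%nat with (S (a - i)) in IHn by lia.
     replace (Nat.max a (S i) - i)%nat with (a - i)%nat by lia. simpl in IHn.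
     assert (b ^ (a - i) + b * b ^ (a - i) / (1 - b) = b ^ (a - i) / (1 - b)) by (field; lra). lra.
   + apply Nat.ltb_ge in E. replace (Nat.max (S a) (S i)) with (Nat.max a (S i)) in IHn by lia. lra. Qed.

Lemma geo_sum b i n a : 0 < b < 1 ->
  sumlist (seq a n) (fun j => if Nat.ltb i j then b ^ (j - i) else 0) <= b / (1 - b).
Proof. intros Hb. eapply Rle_trans; [apply geo_tail; auto|]. unfold Rdiv. apply Rmult_le_compat_r.
 - apply Rlt_le, Rinv_0_lt_compat; lra.
 - replace b with (b ^ 1) at 2 by ring. apply pow_decr; [lra|lia]. Qed.

Lemma rbeta b r : 0 < b < 1 -> INR r * b ^ r <= 1 / (1 - b).
Proof. intros Hb.
 assert (H : forall n, INR n * b ^ n <= sumlist (seq 0 n) (fun k => b ^ k) /\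
                      sumlist (seq 0 n) (fun k => b ^ k) * (1 - b) = 1 - b ^ n).
 { induction n.
   - simpl. rewrite sumlist_nil. split; lra.
   - rewrite seq_S, sumlist_app. simpl (sumlist (0 + n :: nil)%nat _). rewrite sumlist_cons, sumlist_nil.
     rewrite S_INR. simpl. destruct IHn as [H1 H2].
     assert (0 <= b ^ n) by (apply pow_le; lra). assert (0 <= INR n) by apply pos_INR.
     set (Sm := sumlist (seq 0 n) (fun k : nat => b ^ k)) in *. set (t := b ^ n) in *.
     split; [|nra]. assert (0 <= INR n * t) by (apply Rmult_le_pos; lra). assert (0 <= Sm) by lra. assert (b * (INR n * t) <= b * Sm) by (apply Rmult_le_compat_l; lra). nra. }
 destruct (H r) as [H1 H2]. assert (0 < b ^ r) by (apply pow_lt; lra).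
 apply Rle_trans with (sumlist (seq 0 r) (fun k => b ^ k)); auto.
 apply Rmult_le_reg_r with (1 - b); [lra|]. rewrite H2. field_simplify; lra. Qed.

Lemma diag_sum c i n a : 0 <= c -> sumlist (seq a n) (fun j => if Nat.eqb i j then c else 0) <= c.
Proof. intros Hc.
 assert (Z : forall n a, (i < a)%nat -> sumlist (seq a n) (fun j => if Nat.eqb i j then c else 0) = 0).
 { induction n0; intros a0 Ha; [reflexivity|]. simpl seq. rewrite sumlist_cons, IHn0 by lia.
   replace (Nat.eqb i a0) with false by (symmetry; apply Nat.eqb_neq; lia). ring. }
 revert a; induction n; intros a; [simpl; rewrite sumlist_nil; lra|].
 simpl seq. rewrite sumlist_cons. destruct (Nat.eqb i a) eqn:E.
 - apply Nat.eqb_eq in E. rewrite Z by lia. lra.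
 - specialize (IHn (S a)). lra. Qed.

Definition Jset (s : list letter) (M : nat) := seq (length s) (M * length s).
Definition Kb (s : list letter) (M : nat) := (length s + M * length s)%nat.
Definition Zf s M v := ind (forallb (fun j => negb (occurs_at s v j)) (Jset s M)).

Lemma p_le1 Q p : invariant_measure Q p -> forall z, p z <= 1.
Proof. intros [H0 [H1 _]] z. rewrite sumA_eq in H1.
 pose proof (H0 LA); pose proof (H0 LC); pose proof (H0 LG); pose proof (H0 LT). destruct z; lra. Qed.

Lemma sum_sq {X} (l : list X) f c : c * (sumlist l f * sumlist l f) = sumlist l (fun i => sumlist l (fun j => c * f i * f j)).
Proof. rewrite <- (sumlist_scal_r l (sumlist l f) f). rewrite <- sumlist_scal_l. apply sumlist_ext; intro i.
 replace (c * (f i * sumlist l f)) with ((c * f i) * sumlist l f) by ring. rewrite <- sumlist_scal_l. reflexivity. Qed.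

Lemma block_bound Q (HQ : stochastic Q) p (Hp : invariant_measure Q p)
  beta C0 (Hb : 0 < beta < 1) (HC0 : 1 <= C0) (Hgeom : forall z c, trans_prob Q z c <= C0 * beta ^ length c)
  M eta (HM : (1 <= M)%nat) (Heta : 0 < eta)
  (Hces : forall r x y, INR r * eta <= sumlist (seq 0 (M * r)) (fun k => Qpow Q k x y))
  s (Hs : (1 <= length s)%nat) x :
  sumlist (words (Kb s M)) (fun v => trans_prob Q x v * Zf s M v) <=
  1 - INR (length s) * eta * sumA (fun z => p z * trans_prob Q z (rev s)) /
      (1 + 2 * (C0 * (beta / (1 - beta) + INR M / (1 - beta)))).
Proof.
 set (r := length s) in *. set (W := (M * r)%nat). set (K := Kb s M). set (J := Jset s M).
 assert (HK : K = (r + W)%nat) by reflexivity. assert (HJ : J = seq r W) by reflexivity.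
 set (P := sumA (fun z => p z * trans_prob Q z (rev s))).
 set (T := C0 * (beta / (1 - beta) + INR M / (1 - beta))).
 set (Bc := 1 + 2 * T).
 assert (HT : 0 <= T).
 { unfold T. apply Rmult_le_pos; [lra|]. apply Rplus_le_le_0_compat; apply Rdiv_le_0_compat; try lra. apply pos_INR. }
 assert (HB : 0 < Bc) by (unfold Bc; lra).
 set (o := fun j v => ind (occurs_at s v j)).
 set (e := fun j => sumlist (words K) (fun v => trans_prob Q x v * o j v)).
 set (Nf := fun v => sumlist J (fun j => o j v)).
 set (E2 := fun i j => sumlist (words K) (fun v => trans_prob Q x v * o i v * o j v)).
 assert (tpb := tp_bounds Q HQ).
 assert (He0 : forall j, 0 <= e j).
 { intros j. apply sumlist_nonneg. intros v _. pose proof (tpb x v). pose proof (ind_bounds (occurs_at s v j)).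
   unfold o. nra. }
 assert (HJin : forall j, In j J -> (r <= j < r + W)%nat) by (intros j Hj; rewrite HJ in Hj; apply in_seq in Hj; lia).
 assert (HEN : sumlist (words K) (fun v => trans_prob Q x v * Nf v) = sumlist J e).
 { unfold Nf, e. transitivity (sumlist (words K) (fun v => sumlist J (fun j => trans_prob Q x v * o j v))).
   - apply sumlist_ext; intro v. rewrite sumlist_scal_l. reflexivity.
   - apply sumlist_swap. }
 assert (HENlb : INR r * eta * P <= sumlist J e).
 { transitivity (sumlist J (fun j => sumA (fun z => Qpow Q (j - r) x z * trans_prob Q z (rev s)))).
   2:{ right. apply sumlist_ext_in. intros j Hj. apply HJin in Hj. unfold e, o. rewrite occ_prob; auto.
       unfold K, Kb; fold r; fold W; lia. }
   rewrite HJ. replace (seq r W) with (seq (r + 0) W) by (f_equal; lia). rewrite sumlist_seq_shift.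
   transitivity (sumlist (seq 0 W) (fun k => sumA (fun z => Qpow Q k x z * trans_prob Q z (rev s)))).
   2:{ right. apply sumlist_ext. intro k. replace (r + k - r)%nat with k by lia. reflexivity. }
   unfold sumA. rewrite sumlist_swap. fold (sumA (fun z => sumlist (seq 0 W) (fun k => Qpow Q k x z * trans_prob Q z (rev s)))).
   transitivity (sumA (fun z => sumlist (seq 0 W) (fun k => Qpow Q k x z) * trans_prob Q z (rev s))).
   2:{ right. unfold sumA; apply sumlist_ext. intro z. rewrite sumlist_scal_r. reflexivity. }
   unfold P, sumA. rewrite <- sumlist_scal_l. apply sumlist_le. intro z.
   pose proof (Hces r x z). pose proof (tpb z (rev s)). pose proof (p_le1 Q p Hp z). destruct Hp as [Hp0 _].
   pose proof (Hp0 z). fold W in H.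
   assert (0 <= INR r * eta) by (apply Rmult_le_pos; [apply pos_INR|lra]).
   apply Rle_trans with (INR r * eta * trans_prob Q z (rev s)).
   { apply Rmult_le_compat_l; [auto|]. destruct H0. nra. }
   apply Rmult_le_compat_r; lra. }
 assert (HEN2 : sumlist (words K) (fun v => trans_prob Q x v * (Nf v * Nf v)) = sumlist J (fun i => sumlist J (fun j => E2 i j))).
 { unfold Nf, E2. transitivity (sumlist (words K) (fun v => sumlist J (fun i => sumlist J (fun j => trans_prob Q x v * o i v * o j v)))).
   - apply sumlist_ext; intro v. apply sum_sq.
   - rewrite sumlist_swap. apply sumlist_ext; intro i. apply sumlist_swap. }
 set (g := fun d => C0 * (beta ^ d + beta ^ r)).
 set (Af := fun i j => if Nat.ltb i j then e i * g (j - i)%nat else 0).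
 set (Df := fun i j => if Nat.eqb i j then e i else 0).
 assert (HG : forall z c, trans_prob Q z c <= C0 * beta ^ length c) by exact Hgeom.
 assert (Hpair : forall i j, In i J -> In j J -> (i < j)%nat -> E2 i j <= e i * g (j - i)%nat).
 { intros i j Hi Hj Hij. apply HJin in Hi. apply HJin in Hj.
   eapply Rle_trans.
   - unfold E2, o, e. apply (occ_pair Q HQ (fun k => C0 * beta ^ k) HG s x K i j); unfold K, Kb; fold r; fold W; lia.
   - cbv beta. fold r. apply Rmult_le_compat_l; [apply He0|]. unfold g. apply Rmult_le_compat_l; [lra|].
     pose proof (pow_le beta (j - i) ltac:(lra)). pose proof (pow_le beta r ltac:(lra)).
     destruct (Nat.min_spec (j - i) r) as [[_ ->]|[_ ->]]; lra. }
 assert (Hg0 : forall d, 0 <= g d).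
 { intros d. unfold g. pose proof (pow_le beta d ltac:(lra)). pose proof (pow_le beta r ltac:(lra)). nra. }
 assert (HE2 : forall i j, In i J -> In j J -> E2 i j <= Af i j + Af j i + Df i j).
 { intros i j Hi Hj. unfold Af, Df.
   assert (0 <= e i * g (j - i)%nat) by (apply Rmult_le_pos; auto).
   assert (0 <= e j * g (i - j)%nat) by (apply Rmult_le_pos; auto).
   destruct (Nat.lt_trichotomy i j) as [Hij|[Hij|Hij]].
   - rewrite (proj2 (Nat.ltb_lt i j) Hij). rewrite (proj2 (Nat.ltb_ge j i)) by lia.
     rewrite (proj2 (Nat.eqb_neq i j)) by lia. pose proof (Hpair i j Hi Hj Hij). lra.
   - subst j. rewrite (proj2 (Nat.ltb_ge i i)) by lia. rewrite Nat.eqb_refl.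
     right. rewrite !Rplus_0_l. unfold E2, e. apply sumlist_ext; intro v. unfold o. destruct (occurs_at s v i); simpl; ring.
   - rewrite (proj2 (Nat.ltb_lt j i) Hij). rewrite (proj2 (Nat.ltb_ge i j)) by lia.
     rewrite (proj2 (Nat.eqb_neq i j)) by lia. pose proof (Hpair j i Hj Hi Hij).
     assert (E2 i j = E2 j i) by (unfold E2; apply sumlist_ext; intro v; ring). lra. }
 assert (HsumA : forall i, In i J -> sumlist J (fun j => Af i j) <= e i * T).
 { intros i Hi. unfold Af.
   transitivity (sumlist J (fun j => e i * (C0 * ((if Nat.ltb i j then beta ^ (j - i) else 0) + (if Nat.ltb i j then beta ^ r else 0))))).
   { right. apply sumlist_ext; intro j. unfold g. destruct (Nat.ltb i j); ring. }
   rewrite sumlist_scal_l. apply Rmult_le_compat_l; [apply He0|]. rewrite sumlist_scal_l.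
   unfold T. apply Rmult_le_compat_l; [lra|]. rewrite sumlist_plus. apply Rplus_le_compat.
   - rewrite HJ. apply geo_sum; auto.
   - eapply Rle_trans. apply (sumlist_const_le J _ (beta ^ r)).
     + intros j _. pose proof (pow_le beta r ltac:(lra)). destruct (Nat.ltb i j); lra.
     + rewrite HJ, length_seq. unfold W. rewrite mult_INR. rewrite Rmult_assoc.
       pose proof (rbeta beta r Hb). pose proof (pos_INR M).
       apply Rle_trans with (INR M * (1 / (1 - beta))); [apply Rmult_le_compat_l; auto|right; field; lra]. }
 assert (HsumD : forall i, sumlist J (fun j => Df i j) <= e i).
 { intros i. unfold Df. rewrite HJ. apply diag_sum. apply He0. }
 assert (HEN2b : sumlist (words K) (fun v => trans_prob Q x v * (Nf v * Nf v)) <= Bc * sumlist J e).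
 { rewrite HEN2.
   apply Rle_trans with (sumlist J (fun i => sumlist J (fun j => Af i j + Af j i + Df i j))).
   { apply sumlist_le_in. intros i Hi. apply sumlist_le_in. intros j Hj. apply HE2; auto. }
   rewrite (sumlist_ext J _ (fun i => sumlist J (fun j => Af i j) + sumlist J (fun j => Af j i) + sumlist J (fun j => Df i j)))
     by (intro i; rewrite !sumlist_plus; reflexivity).
   rewrite !sumlist_plus. rewrite (sumlist_swap J J (fun i j => Af j i)).
   unfold Bc. rewrite <- sumlist_scal_l.
   apply Rle_trans with (sumlist J (fun i => e i * T) + sumlist J (fun i => e i * T) + sumlist J e).
   - apply Rplus_le_compat; [apply Rplus_le_compat|]; apply sumlist_le_in; auto.
   - rewrite <- !sumlist_plus. right. apply sumlist_ext; intro i. ring. }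
 assert (Hpt : forall v, 2 * Bc * Nf v <= Bc * Bc * (1 - Zf s M v) + Nf v * Nf v).
 { intros v. unfold Zf. fold J. destruct (forallb (fun j => negb (occurs_at s v j)) J) eqn:E; simpl.
   - assert (Nf v = 0).
     { unfold Nf. rewrite <- (sumlist_zero J). apply sumlist_ext_in. intros j Hj.
       rewrite forallb_forall in E. specialize (E j Hj). unfold o. destruct (occurs_at s v j); simpl in *; [discriminate|reflexivity]. }
     rewrite H. lra.
   - pose proof (Rle_0_sqr (Bc - Nf v)). unfold Rsqr in H. nra. }
 assert (Hsum1 := tp_sum1 Q HQ K x).
 assert (Hfin : sumlist (words K) (fun v => trans_prob Q x v * (2 * Bc * Nf v)) <=
               sumlist (words K) (fun v => trans_prob Q x v * (Bc * Bc * (1 - Zf s M v) + Nf v * Nf v))).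
 { apply sumlist_le. intro v. apply Rmult_le_compat_l; [apply tpb|apply Hpt]. }
 rewrite (sumlist_ext _ _ (fun v => 2 * Bc * (trans_prob Q x v * Nf v))) in Hfin by (intro; ring).
 rewrite (sumlist_ext _ (fun v => trans_prob Q x v * (Bc * Bc * (1 - Zf s M v) + Nf v * Nf v))
   (fun v => Bc * Bc * trans_prob Q x v - Bc * Bc * (trans_prob Q x v * Zf s M v) + trans_prob Q x v * (Nf v * Nf v))) in Hfin by (intro; ring).
 rewrite sumlist_scal_l, HEN in Hfin.
 unfold Rminus in Hfin. rewrite !sumlist_plus in Hfin.
 rewrite (sumlist_ext _ (fun v => - (Bc * Bc * (trans_prob Q x v * Zf s M v))) (fun v => (- (Bc * Bc)) * (trans_prob Q x v * Zf s M v))) in Hfin by (intro; ring).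
 rewrite !sumlist_scal_l, Hsum1 in Hfin.
 set (SZ := sumlist (words K) (fun v => trans_prob Q x v * Zf s M v)) in *.
 set (EN := sumlist J e) in *.
 set (EN2 := sumlist (words K) (fun v => trans_prob Q x v * (Nf v * Nf v))) in *.
 assert (Bc * EN <= Bc * Bc * (1 - SZ)) by nra.
 assert (EN <= Bc * (1 - SZ)).
 { apply Rmult_le_reg_l with Bc; auto. nra. }
 assert (Hlast : INR r * eta * P / Bc <= 1 - SZ).
 { unfold Rdiv. apply Rmult_le_reg_r with Bc; auto. rewrite Rmult_assoc, Rinv_l by lra. nra. }
 fold Bc. lra.
Qed.

Lemma pp_nonneg Q p (HQ : stochastic Q) (Hp : invariant_measure Q p) w : 0 <= path_prob p Q w.
Proof. destruct w; simpl; [lra|]. destruct Hp as [Hp0 _]. pose proof (Hp0 l). pose proof (tp_bounds Q HQ l w). nra. Qed.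

Lemma pp_app Q p u w v : path_prob p Q ((u :: w) ++ v) = path_prob p Q (u :: w) * trans_prob Q (last (u :: w) LA) v.
Proof. simpl app. unfold path_prob. rewrite tp_app, last_cons. ring. Qed.

Lemma pp_sum1 Q p (HQ : stochastic Q) (Hp : invariant_measure Q p) n : sumlist (words n) (path_prob p Q) = 1.
Proof. destruct n.
 - rewrite words_0. reflexivity.
 - rewrite words_S. destruct Hp as [_ [H1 _]]. transitivity (sumA p); [|exact H1]. unfold sumA; apply sumlist_ext; intro u.
   unfold path_prob. rewrite sumlist_scal_l, tp_sum1 by auto. ring. Qed.

Lemma pp_snoc Q p (HQ : stochastic Q) (Hp : invariant_measure Q p) w : sumA (fun a => path_prob p Q (w ++ a :: nil)) = path_prob p Q w.
Proof. destruct w as [|u w].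
 - destruct Hp as [_ [H1 _]]. transitivity (sumA p); [|exact H1]. unfold sumA; apply sumlist_ext; intro a. simpl. ring.
 - transitivity (sumA (fun a => path_prob p Q (u :: w) * Q (last (u :: w) LA) a)).
   + unfold sumA; apply sumlist_ext; intro a. rewrite pp_app. change (trans_prob Q (last (u :: w) LA) (a :: nil)) with (Q (last (u :: w) LA) a * 1). ring.
   + unfold sumA. rewrite sumlist_scal_l. fold (sumA (fun a => Q (last (u :: w) LA) a)).
     destruct HQ as [_ H1]. rewrite H1. ring. Qed.

Definition AV (s w : list letter) : bool :=
  forallb (fun m => negb (occurs_at s w m)) (seq (length s) (length w + 1 - length s)).
Definition Ff p Q s n := sumlist (words n) (fun w => ind (AV s w) * path_prob p Q w).

Lemma Ff_bounds Q p (HQ : stochastic Q) (Hp : invariant_measure Q p) s n : 0 <= Ff p Q s n <= 1.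
Proof. unfold Ff. split.
 - apply sumlist_nonneg. intros w _. pose proof (ind_bounds (AV s w)). pose proof (pp_nonneg Q p HQ Hp w). nra.
 - rewrite <- (pp_sum1 Q p HQ Hp n). apply sumlist_le. intros w. pose proof (ind_bounds (AV s w)). pose proof (pp_nonneg Q p HQ Hp w). nra. Qed.

Lemma AV_split s M w v : length v = Kb s M -> AV s (w ++ v) = true -> AV s w = true /\ Zf s M v = 1.
Proof. intros Hv H. unfold AV in *. rewrite forallb_forall in H. rewrite length_app, Hv in H. split.
 - apply forallb_forall. intros m Hm. apply in_seq in Hm.
   assert (Hm' : In m (seq (length s) (length w + Kb s M + 1 - length s))) by (apply in_seq; lia).
   specialize (H m Hm'). rewrite occ_prefix in H by lia. exact H.
 - unfold Zf. replace (forallb _ (Jset s M)) with true; [reflexivity|]. symmetry. apply forallb_forall.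
   intros j Hj. unfold Jset in Hj. apply in_seq in Hj.
   assert (Hm' : In (length w + j)%nat (seq (length s) (length w + Kb s M + 1 - length s))) by (apply in_seq; unfold Kb; lia).
   specialize (H _ Hm'). rewrite occ_shift in H by lia. exact H. Qed.

Lemma Ff_step Q p (HQ : stochastic Q) (Hp : invariant_measure Q p) s M c
  (Hblock : forall y, sumlist (words (Kb s M)) (fun v => trans_prob Q y v * Zf s M v) <= c) n :
  (1 <= n)%nat -> Ff p Q s (n + Kb s M) <= c * Ff p Q s n.
Proof. intros Hn. unfold Ff. rewrite words_split. rewrite <- sumlist_scal_l. apply sumlist_le_in. intros w Hw.
 apply words_length in Hw. destruct w as [|u w]; [simpl in Hw; lia|].
 apply Rle_trans with (sumlist (words (Kb s M)) (fun v => ind (AV s (u :: w)) * path_prob p Q (u :: w) * (trans_prob Q (last (u :: w) LA) v * Zf s M v))).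
 - apply sumlist_le_in. intros v Hv. apply words_length in Hv. rewrite pp_app.
   pose proof (pp_nonneg Q p HQ Hp (u :: w)). pose proof (tp_bounds Q HQ (last (u :: w) LA) v).
   destruct (AV s ((u :: w) ++ v)) eqn:E.
   + destruct (AV_split s M (u :: w) v Hv E) as [E1 E2]. rewrite E1, E2. simpl. lra.
   + change (ind false) with 0. rewrite Rmult_0_l. pose proof (ind_bounds (AV s (u :: w))). pose proof (ind_bounds (forallb (fun j => negb (occurs_at s v j)) (Jset s M))).
     unfold Zf. apply Rmult_le_pos; apply Rmult_le_pos; lra.
 - rewrite sumlist_scal_l. pose proof (Hblock (last (u :: w) LA)).
   pose proof (ind_bounds (AV s (u :: w))). pose proof (pp_nonneg Q p HQ Hp (u :: w)).
   assert (0 <= ind (AV s (u :: w)) * path_prob p Q (u :: w)) by nra. nra. Qed.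

Lemma Ff_iter Q p (HQ : stochastic Q) (Hp : invariant_measure Q p) s K c (Hc : 0 <= c)
  (Hstep : forall n, (1 <= n)%nat -> Ff p Q s (n + K) <= c * Ff p Q s n) :
  forall j i, Ff p Q s (S i + j * K) <= c ^ j.
Proof. induction j; intros i.
 - simpl. rewrite Nat.add_0_r. apply Ff_bounds; auto.
 - replace (S i + S j * K)%nat with ((S i + j * K) + K)%nat by lia. simpl pow.
   eapply Rle_trans; [apply Hstep; lia|]. apply Rmult_le_compat_l; auto. Qed.

Lemma first_hit_AV s w a : first_hit s (w ++ a :: nil) = true -> AV s w = true.
Proof. unfold first_hit, AV. intros H. apply andb_prop in H. destruct H as [_ H].
 rewrite forallb_forall in H. apply forallb_forall. intros m Hm.
 rewrite length_app in H. simpl length in H. specialize (H m Hm).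
 apply in_seq in Hm. rewrite occ_prefix in H by lia. exact H. Qed.

Lemma hit_le_Ff Q p (HQ : stochastic Q) (Hp : invariant_measure Q p) s n : hit_prob p Q s (S n) <= Ff p Q s n.
Proof. unfold hit_prob, Ff. replace (S n) with (n + 1)%nat by lia. rewrite words_split.
 apply sumlist_le_in. intros w _. rewrite words_S.
 transitivity (sumA (fun a => ind (AV s w) * path_prob p Q (w ++ a :: nil))).
 - unfold sumA. apply sumlist_le. intros a. rewrite words_0.
   destruct (first_hit s (w ++ a :: nil)) eqn:E.
   + rewrite (first_hit_AV s w a E). simpl. lra.
   + pose proof (ind_bounds (AV s w)). pose proof (pp_nonneg Q p HQ Hp (w ++ a :: nil)). nra.
 - right. unfold sumA. rewrite sumlist_scal_l. fold (sumA (fun a => path_prob p Q (w ++ a :: nil))).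
   rewrite pp_snoc; auto. Qed.

Lemma hit_nonneg Q p (HQ : stochastic Q) (Hp : invariant_measure Q p) s n : 0 <= hit_prob p Q s n.
Proof. unfold hit_prob. apply sumlist_nonneg. intros w _. destruct (first_hit s w); [apply pp_nonneg; auto|lra]. Qed.

Lemma hit_0 Q p s : (1 <= length s)%nat -> hit_prob p Q s 0 = 0.
Proof. intros H. unfold hit_prob. rewrite words_0. unfold first_hit. simpl length.
 destruct (length s) as [|k]; [lia|]. simpl. reflexivity. Qed.

Lemma exp_pow_INR x n : exp x ^ n = exp (INR n * x).
Proof. induction n. simpl. rewrite Rmult_0_l, exp_0. reflexivity.
 rewrite S_INR. simpl pow. rewrite IHn, <- exp_plus. f_equal. ring. Qed.

Lemma pow_le1 x n : 0 <= x <= 1 -> x ^ n <= 1.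
Proof. intros H. replace 1 with (x ^ 0) by reflexivity. apply pow_decr; [lra|lia]. Qed.

Lemma tbound t n m : 0 <= t -> (n <= m)%nat -> t ^ n <= 1 + t ^ m.
Proof. intros Ht Hnm. pose proof (pow_le t m Ht). destruct (Rle_lt_dec t 1).
 - pose proof (pow_le1 t n ltac:(lra)). lra.
 - pose proof (Rle_pow t n m ltac:(lra) Hnm). lra. Qed.

Theorem proposition2 (Q : letter -> letter -> R) (p : letter -> R)
  (HQ : stochastic Q) (Hirr : irreducible Q) (Hap : aperiodic Q)
  (Hp : invariant_measure Q p) :
  exists kappa : R, 0 < kappa /\
    forall (r : nat) (s : list letter),
      (1 <= r)%nat -> length s = r -> 0 < pword p Q s ->
      Rbar_le (Finite (1 + kappa * pword p Q s)) (CV_radius (hit_prob p Q s)).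
Proof.
 destruct (geom_bound Q HQ Hirr Hap) as [beta [C0 [Hb [HC0 Hgeom]]]].
 destruct (cesaro Q HQ Hirr) as [M [eta [HM [Heta Hces]]]].
 set (Bc := 1 + 2 * (C0 * (beta / (1 - beta) + INR M / (1 - beta)))).
 assert (HB : 1 <= Bc).
 { unfold Bc. assert (0 <= C0 * (beta / (1 - beta) + INR M / (1 - beta))); [|lra].
   apply Rmult_le_pos; [lra|]. apply Rplus_le_le_0_compat; apply Rdiv_le_0_compat; try lra. apply pos_INR. }
 assert (HM1 : 0 < INR M + 1) by (pose proof (pos_INR M); lra).
 exists (eta / (Bc * (INR M + 1))). split.
 { apply Rdiv_lt_0_compat; auto. apply Rmult_lt_0_compat; lra. }
 intros r s Hr Hs HP. subst r.
 set (P := pword p Q s) in *.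
 assert (HPeq : sumA (fun z => p z * trans_prob Q z (rev s)) = P).
 { unfold P, pword. destruct (rev s) as [|u rest] eqn:E.
   - apply (f_equal (@length letter)) in E. rewrite length_rev in E. simpl in E. lia.
   - unfold path_prob. transitivity (sumA (fun z => p z * Q z u) * trans_prob Q u rest).
     + rewrite !sumA_eq. simpl. ring.
     + destruct Hp as [_ [_ H3]]. rewrite H3. reflexivity. }
 set (K := Kb s M).
 set (theta := INR (length s) * eta * P / Bc).
 assert (Hblock : forall y, sumlist (words K) (fun v => trans_prob Q y v * Zf s M v) <= 1 - theta).
 { intros y. unfold theta. rewrite <- HPeq. fold Bc. apply block_bound; auto. }
 assert (Hth0 : 0 < theta).
 { unfold theta. apply Rdiv_lt_0_compat; [|lra]. apply Rmult_lt_0_compat; [apply Rmult_lt_0_compat; auto|auto].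
   apply lt_0_INR; lia. }
 assert (Hth1 : theta <= 1).
 { pose proof (Hblock LA). assert (0 <= sumlist (words K) (fun v => trans_prob Q LA v * Zf s M v)); [|lra].
   apply sumlist_nonneg. intros v _. pose proof (tp_bounds Q HQ LA v). unfold Zf.
   pose proof (ind_bounds (forallb (fun j => negb (occurs_at s v j)) (Jset s M))). nra. }
 assert (Hstep := Ff_step Q p HQ Hp s M (1 - theta) Hblock).
 assert (Hiter := Ff_iter Q p HQ Hp s K (1 - theta) ltac:(lra) Hstep).
 set (kappa := eta / (Bc * (INR M + 1))).
 assert (HkK : INR K * (kappa * P) = theta).
 { unfold K, Kb, kappa, theta. rewrite plus_INR, mult_INR. field. split; lra. }
 assert (Hk0 : 0 <= kappa * P).
 { unfold kappa. apply Rmult_le_pos; [|lra]. apply Rdiv_le_0_compat; [lra|]. apply Rmult_lt_0_compat; lra. }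
 set (R0 := 1 + kappa * P).
 assert (Hdec : forall t, 0 <= t < R0 -> (1 - theta) * t ^ K <= 1).
 { intros t Ht. assert (t ^ K <= exp theta).
   { apply Rle_trans with (R0 ^ K). apply pow_incr; lra.
     apply Rle_trans with (exp (kappa * P) ^ K). apply pow_incr. unfold R0. pose proof (exp_ineq1_le (kappa * P)). lra.
     rewrite exp_pow_INR, HkK. lra. }
   pose proof (exp_ineq1_le (- theta)). assert (exp (- theta) * exp theta = 1) by (rewrite <- exp_plus; replace (- theta + theta) with 0 by ring; apply exp_0).
   pose proof (exp_pos theta). pose proof (pow_le t K ltac:(lra)).
   apply Rle_trans with ((1 - theta) * exp theta). apply Rmult_le_compat_l; lra. nra. }
 assert (HK1 : (1 <= K)%nat) by (unfold K, Kb; lia).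
 assert (Hbnd : forall t, 0 <= t < R0 -> forall n, Rabs (hit_prob p Q s n * t ^ n) <= 1 + t ^ (K + 2)).
 { intros t Ht n. pose proof (hit_nonneg Q p HQ Hp s n). pose proof (pow_le t n ltac:(lra)).
   rewrite Rabs_pos_eq by nra.
   destruct n as [|m].
   - rewrite hit_0 by lia. pose proof (pow_le t (K + 2) ltac:(lra)). lra.
   - pose proof (hit_le_Ff Q p HQ Hp s m).
     destruct m as [|m'].
     + pose proof (Ff_bounds Q p HQ Hp s 0). pose proof (tbound t 1 (K + 2) ltac:(lra) ltac:(lia)).
       apply Rle_trans with (1 * t ^ 1); [apply Rmult_le_compat_r; lra|lra].
     + set (j := (m' / K)%nat). set (i := (m' mod K)%nat).
       assert (Hm : m' = (i + j * K)%nat) by (unfold i, j; pose proof (Nat.div_mod_eq m' K); lia).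
       assert (Hi : (i < K)%nat) by (unfold i; apply Nat.mod_upper_bound; lia).
       pose proof (Hiter j i) as Hj. replace (S i + j * K)%nat with (S m') in Hj by lia.
       apply Rle_trans with ((1 - theta) ^ j * t ^ (S (S m'))).
       { apply Rmult_le_compat_r; [lra|]. lra. }
       replace (S (S m')) with ((i + 2) + K * j)%nat by lia. rewrite pow_add, pow_mult.
       pose proof (Hdec t Ht) as Hd. pose proof (pow_le t K ltac:(lra)) as HtK.
       assert (Hpj : ((1 - theta) * t ^ K) ^ j <= 1) by (apply pow_le1; split; [apply Rmult_le_pos; lra|lra]).
       rewrite Rpow_mult_distr in Hpj. pose proof (pow_le t (i + 2) ltac:(lra)).
       pose proof (tbound t (i + 2) (K + 2) ltac:(lra) ltac:(lia)).
       apply Rle_trans with (t ^ (i + 2)); [|lra].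
       replace ((1 - theta) ^ j * (t ^ (i + 2) * (t ^ K) ^ j)) with (t ^ (i + 2) * ((1 - theta) ^ j * (t ^ K) ^ j)) by ring.
       apply Rle_trans with (t ^ (i + 2) * 1); [apply Rmult_le_compat_l; lra|lra]. }
 destruct (CV_radius_bounded (hit_prob p Q s)) as [Hub _].
 assert (HE : forall t, 0 <= t < R0 -> Rbar_le (Finite t) (CV_radius (hit_prob p Q s))).
 { intros t Ht. apply Hub. exists (1 + t ^ (K + 2)). apply Hbnd; auto. }
 fold kappa. fold P. fold R0.
 destruct (CV_radius (hit_prob p Q s)) as [rho| |] eqn:Er; simpl.
 - apply Rnot_lt_le. intros Hlt. set (t := (Rmax rho 0 + R0) / 2).
   assert (HR0 : 1 <= R0) by (unfold R0; lra).
   pose proof (Rmax_l rho 0). pose proof (Rmax_r rho 0).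
   assert (Hmx : Rmax rho 0 < R0) by (apply Rmax_lub_lt; lra).
   specialize (HE t ltac:(unfold t; lra)). simpl in HE. unfold t in HE. lra.
 - exact I.
 - specialize (HE 0 ltac:(unfold R0; lra)). simpl in HE. exact HE.
Qed.
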